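(* Let $\delta,k'$ be non-negative integers with $\delta>k'+1$, and let $r,t$ be non-negative integers such that $\binom{\delta}{2}-k'=\binom{r}{2}+t$ with $0\le t<r$. Then \[\binom{\delta}{3}-\binom{r}{3}-\binom{t}{2}=\sum_{i=2}^{k'+1}(\delta-i).\]
   Context: Binomial coefficients satisfy $\binom{a}{b}=0$ when $0\le a<b$. *)

(* Defs.v *)
From mathcomp Require Import all_boot all_order all_algebra.

(* Main.v *)
Require Import Defs.
From mathcomp Require Import all_boot all_order all_algebra.
From mathcomp Require Import zify.
Import GRing.Theory.
Local Open Scope ring_scope.
Lemma c2S n : ('C(n.+1, 2) = 'C(n,2) + n)%N.
Proof. by rewrite binS bin1. Qed.
Lemma c3S n : ('C(n.+1, 3) = 'C(n,3) + 'C(n,2))%N.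
Proof. by rewrite binS. Qed.
Lemma sumL d k : (k <= d.+1)%N -> \sum_(2 <= i < k.+2) ((d.+2)%:Z - i%:Z) = ('C(d.+1,2))%:Z - ('C(d.+1-k,2))%:Z.
Proof.
elim: k => [|k IH] Hk.
  by rewrite big_geq // subn0 subrr.
rewrite big_nat_recr //= IH; last lia.
have -> : (d.+1 - k = (d-k).+1)%N by lia.
have -> : (d.+1 - k.+1 = (d-k))%N by lia.
rewrite (c2S (d-k)). lia.
Qed.
Theorem lemma3p7 (delta k' r t : nat) :
  (k'.+1 < delta)%N ->
  ('C(delta, 2))%:Z - k'%:Z = ('C(r, 2))%:Z + t%:Z ->
  (t < r)%N ->
  ('C(delta, 3))%:Z - ('C(r, 3))%:Z - ('C(t, 2))%:Z
    = \sum_(2 <= i < k'.+2) (delta%:Z - i%:Z).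
Proof.
case: delta => [|[|d]] Hk // E Ht.
rewrite sumL; last lia.
have E1 := c2S d.+1.
have [Hr|Hr] := leqP r d.
  have Hr1 : (r.+1 <= d.+1)%N by []. have := leq_bin2l 2 Hr1; have := c2S r. lia.
have [Hr2|Hr2] := leqP (d.+3) r.
  have := leq_bin2l 2 Hr2; have := c2S d.+2. lia.
have [Er|Er] : r = d.+1 \/ r = d.+2 by lia.
  all: subst r.
  have -> : t = (d.+1 - k')%N by lia.
  rewrite (c3S d.+1). lia.
have -> : t = 0%N by lia.
have -> : k' = 0%N by lia.
rewrite subn0 bin0n. lia.
Qed.
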